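(* Let $\mathcal H$ be a separable complex Hilbert space, $A\in L(\mathcal H)^+$, $B\in L(\mathcal H)$ with closed range, and $\mathcal M$ a closed subspace such that $B(\mathcal M)$ is closed. Then $B$ admits an $A$-inverse restricted to $\mathcal M$ if and only if the pair $(A,B(\mathcal M))$ is compatible.
   Context: $\|z\|_A=\langle Az,z\rangle^{1/2}$. $G\in L(\mathcal H)$ is an $A$-inverse of $B$ restricted to $\mathcal M$ if $R(G)\subseteq\mathcal M$ and for each $y\in\mathcal H$, $\|y-BGy\|_A\le\|y-Bx\|_A$ for all $x\in\mathcal M$. $(A,\mathcal S)$ is compatible if there exists $Q\in L(\mathcal H)$ with $Q^2=Q$, $R(Q)=\mathcal S$, $AQ=Q^*A$. *)

(* Defs.v *)
From HB Require Import structures.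
From mathcomp Require Import all_boot all_order all_algebra.
From mathcomp Require Import complex.
From mathcomp Require Import reals.
Set Implicit Arguments. Unset Strict Implicit. Unset Printing Implicit Defensive.
Import Order.TTheory GRing.Theory Num.Theory.
Local Open Scope ring_scope.

Section Hilbert.
Variables (R : realType).
Local Notation C := (R[i]).
Variables (H : lmodType C) (ip : H -> H -> C).

Definition hnorm (x : H) : R := Num.sqrt (complex.Re (ip x x)).

Definition converges (u : nat -> H) (l : H) : Prop :=
  forall eps : R, 0 < eps -> exists N : nat, forall n : nat, (N <= n)%N ->
    hnorm (u n - l) < eps.

Definition cauchy (u : nat -> H) : Prop :=
  forall eps : R, 0 < eps -> exists N : nat, forall m n : nat,
    (N <= m)%N -> (N <= n)%N -> hnorm (u m - u n) < eps.

Definition is_separable_hilbert : Prop :=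
  [/\ (forall (a : C) (x y z : H), ip (a *: x + y) z = a * ip x z + ip y z) /\
      (forall x y : H, ip y x = conjc (ip x y)),
      (forall x : H, 0 <= ip x x),
      (forall x : H, ip x x = 0 -> x = 0),
      (forall u : nat -> H, cauchy u -> exists l : H, converges u l) &
      (exists D : nat -> H, forall (x : H) (eps : R), 0 < eps ->
          exists n : nat, hnorm (x - D n) < eps)].

Definition closed_set (S : H -> Prop) : Prop :=
  forall (u : nat -> H) (l : H), (forall n, S (u n)) -> converges u l -> S l.

Definition subspace (S : H -> Prop) : Prop :=
  [/\ S 0, (forall x y, S x -> S y -> S (x + y)) &
      (forall (a : C) x, S x -> S (a *: x))].

Definition closed_subspace (S : H -> Prop) : Prop := subspace S /\ closed_set S.

Definition bounded_op (T : H -> H) : Prop :=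
  (forall (a : C) (x y : H), T (a *: x + y) = a *: T x + T y) /\
  (exists M : R, forall x : H, hnorm (T x) <= M * hnorm x).

Definition positive_op (A : H -> H) : Prop :=
  bounded_op A /\ forall x : H, 0 <= ip (A x) x.

Definition op_range (T : H -> H) : H -> Prop := fun y => exists x, T x = y.

Definition op_image (T : H -> H) (S : H -> Prop) : H -> Prop :=
  fun y => exists2 x, S x & T x = y.

Definition is_adjoint (T S : H -> H) : Prop :=
  forall x y : H, ip (T x) y = ip x (S y).

Definition Anorm (A : H -> H) (z : H) : R := Num.sqrt (complex.Re (ip (A z) z)).

Definition A_inverse_restricted (A B : H -> H) (M : H -> Prop) (G : H -> H) : Prop :=
  [/\ bounded_op G,
      (forall y, op_range G y -> M y) &
      (forall y x : H, M x -> Anorm A (y - B (G y)) <= Anorm A (y - B x))].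

Definition compatible (A : H -> H) (S : H -> Prop) : Prop :=
  exists Q : H -> H,
    [/\ bounded_op Q,
        (forall x, Q (Q x) = Q x),
        (forall y, op_range Q y <-> S y) &
        exists Qs : H -> H, bounded_op Qs /\ is_adjoint Q Qs /\
          (forall x, A (Q x) = Qs (A x))].

End Hilbert.

(* Main.v *)
From HB Require Import structures.
From mathcomp Require Import all_boot all_order all_algebra.
From mathcomp Require Import complex.
From mathcomp Require Import reals.
From mathcomp Require Import ring lra.
From mathcomp Require Import boolp classical_sets.
Require Import Defs.
Set Implicit Arguments. Unset Strict Implicit. Unset Printing Implicit Defensive.
Import Order.TTheory GRing.Theory Num.Theory.
Local Open Scope ring_scope.
Local Open Scope complex_scope.
Section Basic.
Context (R : realType) (H : lmodType R[i]) (ip : H -> H -> R[i])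
  (hH : is_separable_hilbert ip).

Local Notation hnorm := (hnorm ip).
Definition nn (x : H) : R := complex.Re (ip x x).

Lemma ipD a x y z : ip (a *: x + y) z = a * ip x z + ip y z.
Proof. by case: hH => [[h _] _ _ _ _]; apply: h. Qed.
Lemma ipC x y : ip y x = conjc (ip x y).
Proof. by case: hH => [[_ h] _ _ _ _]; apply: h. Qed.
Lemma ip_ge0 x : 0 <= ip x x.
Proof. by case: hH => [_ h _ _ _]; apply: h. Qed.
Lemma ip_eq0 x : ip x x = 0 -> x = 0.
Proof. by case: hH => [_ _ h _ _]; apply: h. Qed.

Lemma ipDl x y z : ip (x + y) z = ip x z + ip y z.
Proof. by rewrite -{1}[x]scale1r ipD mul1r. Qed.
Lemma ip0l z : ip 0 z = 0.
Proof. have h := ipDl 0 0 z; rewrite addr0 in h.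
by apply: (addrI (ip 0 z)); rewrite addr0 -h. Qed.
Lemma ipZl a x z : ip (a *: x) z = a * ip x z.
Proof. by rewrite -[a *: x]addr0 ipD ip0l addr0. Qed.
Lemma ipNl x z : ip (- x) z = - ip x z.
Proof. by rewrite -scaleN1r ipZl mulN1r. Qed.
Lemma ipBl x y z : ip (x - y) z = ip x z - ip y z.
Proof. by rewrite ipDl ipNl. Qed.
Lemma ipDr x y z : ip z (x + y) = ip z x + ip z y.
Proof. by rewrite ipC ipDl rmorphD /= -!ipC. Qed.
Lemma ipZr a x z : ip z (a *: x) = conjc a * ip z x.
Proof. by rewrite ipC ipZl rmorphM /= -ipC. Qed.
Lemma ip0r z : ip z 0 = 0.
Proof. by rewrite ipC ip0l conjc0. Qed.
Lemma ipNr x z : ip z (- x) = - ip z x.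
Proof. by rewrite ipC ipNl rmorphN /= -ipC. Qed.
Lemma ipBr x y z : ip z (x - y) = ip z x - ip z y.
Proof. by rewrite ipDr ipNr. Qed.

Lemma ipxx x : ip x x = (nn x)%:C.
Proof. have := ip_ge0 x; rewrite lecE => /andP[/eqP h _].
by rewrite /nn; case: (ip x x) h => p q /= ->. Qed.
Lemma nn_ge0 x : 0 <= nn x.
Proof. by have := ip_ge0 x; rewrite ipxx ler0c. Qed.
Lemma nn_eq0 x : nn x = 0 -> x = 0.
Proof. by move=> h; apply: ip_eq0; rewrite ipxx h. Qed.
Lemma Re_ipC x y : complex.Re (ip y x) = complex.Re (ip x y).
Proof. by rewrite ipC; case: (ip x y). Qed.
Lemma nnD x y : nn (x + y) = nn x + nn y + 2 * complex.Re (ip x y).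
Proof. rewrite /nn ipDl !ipDr !raddfD /= Re_ipC. ring. Qed.
Lemma nnN x : nn (- x) = nn x.
Proof. by rewrite /nn ipNl ipNr opprK. Qed.
Lemma nnB x y : nn (x - y) = nn x + nn y - 2 * complex.Re (ip x y).
Proof. rewrite nnD nnN ipNr raddfN /=. ring. Qed.
Lemma nnZ a x : nn (a *: x) = (complex.Re a ^+ 2 + complex.Im a ^+ 2) * nn x.
Proof. rewrite /nn ipZl ipZr ipxx mulrA [a * _]mulrC.
by case: a => p q /=; simpc; ring. Qed.

Lemma hnorm_ge0 x : 0 <= hnorm x.
Proof. exact: sqrtr_ge0. Qed.
Lemma hnorm_sq x : hnorm x ^+ 2 = nn x.
Proof. by rewrite /Defs.hnorm sqr_sqrtr // nn_ge0. Qed.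
Lemma hnorm_eq0 x : hnorm x = 0 -> x = 0.
Proof. by move=> h; apply: nn_eq0; rewrite -hnorm_sq h expr0n. Qed.
Lemma hnorm0 : hnorm 0 = 0.
Proof. by rewrite /Defs.hnorm ip0l /= sqrtr0. Qed.
Lemma hnormN x : hnorm (- x) = hnorm x.
Proof. by rewrite /Defs.hnorm -/(nn _) nnN. Qed.
Lemma hnormB x y : hnorm (x - y) = hnorm (y - x).
Proof. by rewrite -hnormN opprB. Qed.
Lemma hnormZ a x : hnorm (a *: x) = Num.sqrt (complex.Re a ^+ 2 + complex.Im a ^+ 2) * hnorm x.
Proof. by rewrite /Defs.hnorm -!/(nn _) nnZ sqrtrM // addr_ge0 // sqr_ge0. Qed.
Lemma hnormZr (t : R) x : hnorm (t%:C *: x) = `|t| * hnorm x.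
Proof. by rewrite hnormZ /= expr0n /= addr0 sqrtr_sqr. Qed.

Lemma CS_sq x y : complex.Re (ip x y) ^+ 2 <= nn x * nn y.
Proof.
set r := complex.Re (ip x y).
have key t : 0 <= nn x + 2 * t * r + t ^+ 2 * nn y.
  have := nn_ge0 (x + t%:C *: y).
  rewrite nnD nnZ /= expr0n /= addr0 ipZr /=.
  have e : complex.Re (conjc t%:C * ip x y) = t * r.
    by rewrite /r; case: (ip x y) => p q /=; simpc.
  rewrite e => h; lra.
have hx := nn_ge0 x; have hy := nn_ge0 y.
have [hy0|hy0] := eqVneq (nn y) 0.
  rewrite hy0 mulr0.
  have [r0|r0] := eqVneq r 0; first by rewrite r0 expr0n.
  have := key (- (nn x + 1) / (2 * r)); rewrite hy0 mulr0 addr0.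
  have -> : 2 * (- (nn x + 1) / (2 * r)) * r = - (nn x + 1).
    by field; exact: r0.
  move=> h; lra.
have hyp : 0 < nn y by rewrite lt_def hy0 hy.
have := key (- r / nn y).
have -> : nn x + 2 * (- r / nn y) * r + (- r / nn y) ^+ 2 * nn y = nn x - r ^+ 2 / nn y.
  by field.
rewrite subr_ge0 ler_pdivrMr // mulrC => h; lra.
Qed.

Lemma CS x y : `|complex.Re (ip x y)| <= hnorm x * hnorm y.
Proof.
rewrite -(ler_pXn2r (n:=2)) ?nnegrE ?mulr_ge0 ?hnorm_ge0 //.
by rewrite exprMn !hnorm_sq real_normK ?num_real // CS_sq.
Qed.

Lemma CS' x y : complex.Re (ip x y) <= hnorm x * hnorm y.
Proof. exact: le_trans (ler_norm _) (CS x y). Qed.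

Lemma hnormD x y : hnorm (x + y) <= hnorm x + hnorm y.
Proof.
rewrite -(ler_pXn2r (n:=2)) ?nnegrE ?addr_ge0 ?hnorm_ge0 //.
rewrite hnorm_sq nnD sqrrD !hnorm_sq.
have := CS' x y; lra.
Qed.

Lemma hnormB_tri x y z : hnorm (x - z) <= hnorm (x - y) + hnorm (y - z).
Proof. have -> : x - z = (x - y) + (y - z) by rewrite addrA subrK.
exact: hnormD. Qed.

Lemma Im_ip_bound x y : `|complex.Im (ip x y)| <= hnorm x * hnorm y.
Proof.
have := CS x ('i *: y).
rewrite hnormZ /= expr0n expr1n add0r sqrtr1 mul1r ipZr.
by case: (ip x y) => p q /=; simpc.
Qed.

Lemma ip_small x y (e : R) : (forall d, 0 < d -> hnorm y < d) -> ip x y = 0.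
Proof.
move=> h.
have hy : hnorm y = 0.
  apply/eqP; rewrite eq_le hnorm_ge0 andbT; apply/ler_addgt0Pr => d d0.
  by rewrite add0r ltW // h.
have := CS x y; have := Im_ip_bound x y; rewrite hy mulr0.
case: (ip x y) => p q /= h1 h2.
have p0 : p = 0 by apply/normr0_eq0/eqP; rewrite eq_le h2 normr_ge0.
have q0 : q = 0 by apply/normr0_eq0/eqP; rewrite eq_le h1 normr_ge0.
by rewrite p0 q0.
Qed.

End Basic.
Section Form.
Context (R : realType) (H : lmodType R[i]) (f : H -> H -> R[i])
  (fD : forall a x y z, f (a *: x + y) z = a * f x z + f y z)
  (fC : forall x y, f y x = conjc (f x y)).

Lemma fDl x y z : f (x + y) z = f x z + f y z.
Proof. by rewrite -{1}[x]scale1r fD mul1r. Qed.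
Lemma f0l z : f 0 z = 0.
Proof. have h := fDl 0 0 z; rewrite addr0 in h.
by apply: (addrI (f 0 z)); rewrite addr0 -h. Qed.
Lemma fZl a x z : f (a *: x) z = a * f x z.
Proof. by rewrite -[a *: x]addr0 fD f0l addr0. Qed.
Lemma fNl x z : f (- x) z = - f x z.
Proof. by rewrite -scaleN1r fZl mulN1r. Qed.
Lemma fBl x y z : f (x - y) z = f x z - f y z.
Proof. by rewrite fDl fNl. Qed.
Lemma fDr x y z : f z (x + y) = f z x + f z y.
Proof. by rewrite fC fDl rmorphD /= -!fC. Qed.
Lemma fZr a x z : f z (a *: x) = conjc a * f z x.
Proof. by rewrite fC fZl rmorphM /= -fC. Qed.
Lemma f0r z : f z 0 = 0.
Proof. by rewrite fC f0l conjc0. Qed.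
Lemma fNr x z : f z (- x) = - f z x.
Proof. by rewrite fC fNl rmorphN /= -fC. Qed.
Lemma fBr x y z : f z (x - y) = f z x - f z y.
Proof. by rewrite fDr fNr. Qed.

Definition qf x := complex.Re (f x x).
Lemma Re_fC x y : complex.Re (f y x) = complex.Re (f x y).
Proof. by rewrite fC; case: (f x y). Qed.
Lemma qfD x y : qf (x + y) = qf x + qf y + 2 * complex.Re (f x y).
Proof. rewrite /qf fDl !fDr !raddfD /= Re_fC. ring. Qed.
Lemma qfB_scale u k c : qf (u - c *: k) =
  qf u - 2 * complex.Re (conjc c * f u k) + (complex.Re c ^+ 2 + complex.Im c ^+ 2) * qf k.
Proof.
rewrite /qf !fBl !fBr !fZl !fZr (fC u k) !raddfB /=.
rewrite /qf; case: c => p q; case: (f u k) => a b; case: (f k k) => g h /=.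
simpc. ring.
Qed.

Lemma var_orth u k : (forall c, qf u <= qf (u - c *: k)) -> f u k = 0.
Proof.
move=> h.
set F := qf k.
set a := f u k.
have key t : 0 < t -> 0 <= (complex.Re a ^+ 2 + complex.Im a ^+ 2) * (t * F - 2) * t.
  move=> t0; have := h (t%:C * a); rewrite qfB_scale -/a -/F.
  have -> : complex.Re (conjc (t%:C * a) * a) = t * (complex.Re a ^+ 2 + complex.Im a ^+ 2).
    by case: (a) => p q /=; simpc; ring.
  have -> : complex.Re (t%:C * a) ^+ 2 + complex.Im (t%:C * a) ^+ 2 =
     t ^+ 2 * (complex.Re a ^+ 2 + complex.Im a ^+ 2).
    by case: (a) => p q /=; simpc; ring.
  move=> hh. nra.
set N := complex.Re a ^+ 2 + complex.Im a ^+ 2.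
have N0 : 0 <= N by rewrite /N addr_ge0 // sqr_ge0.
have tp : 0 < (`|F| + 1)^-1 by rewrite invr_gt0; have := normr_ge0 F; lra.
have := key _ tp.
have hF : (`|F| + 1)^-1 * F < 1.
  rewrite mulrC ltr_pdivrMr; last by have := normr_ge0 F; lra.
  have := ler_norm F; lra.
move=> hk.
have N00 : N = 0.
  apply/eqP; rewrite eq_le N0 andbT.
  have : 0 <= N * ((`|F| + 1)^-1 * F - 2) by rewrite -(pmulr_lge0 _ tp).
  nra.
have p0 : complex.Re a = 0.
  by apply/eqP; rewrite -sqrf_eq0 eq_le sqr_ge0 andbT -N00 /N lerDl sqr_ge0.
have q0 : complex.Im a = 0.
  by apply/eqP; rewrite -sqrf_eq0 eq_le sqr_ge0 andbT -N00 /N lerDr sqr_ge0.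
by apply/eqP; rewrite eq_complex p0 q0 /= !eqxx.
Qed.
End Form.

Section Ops.
Context (R : realType) (H : lmodType R[i]) (ip : H -> H -> R[i])
  (hH : is_separable_hilbert ip).
Local Notation hnorm := (hnorm ip).

Section Lin.
Context (T : H -> H) (hT : forall (a : R[i]) (x y : H), T (a *: x + y) = a *: T x + T y).
Lemma opD x y : T (x + y) = T x + T y.
Proof. by rewrite -{1}[x]scale1r hT scale1r. Qed.
Lemma op0 : T 0 = 0.
Proof. have h := opD 0 0; rewrite addr0 in h.
by apply: (addrI (T 0)); rewrite addr0 -h. Qed.
Lemma opZ a x : T (a *: x) = a *: T x.
Proof. by rewrite -[a *: x]addr0 hT op0 addr0. Qed.
Lemma opN x : T (- x) = - T x.
Proof. by rewrite -scaleN1r opZ scaleN1r. Qed.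
Lemma opB x y : T (x - y) = T x - T y.
Proof. by rewrite opD opN. Qed.
End Lin.

Lemma bnd_pos T : bounded_op ip T -> exists K, 0 < K /\ forall x, hnorm (T x) <= K * hnorm x.
Proof.
case=> _ [K hK]; exists (`|K| + 1); split; first by have := normr_ge0 K; lra.
move=> x; apply: le_trans (hK x) _; apply: ler_wpM2r; first exact: hnorm_ge0.
by have := ler_norm K; lra.
Qed.

Lemma pos_herm A : positive_op ip A -> forall x y, ip (A x) y = conjc (ip (A y) x).
Proof.
case=> [[hl _] hp] x y.
have r1 z : complex.Im (ip (A z) z) = 0 by apply: ger0_Im.
have e1 := r1 (x + y).
have e2 := r1 (x + 'i *: y).
rewrite (opD hl) !(ipDl hH) !(ipDr hH) in e1.
rewrite (opD hl) (opZ hl) !(ipDl hH) !(ipDr hH) !(ipZl hH) !(ipZr hH) in e2.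
move: e1 e2 (r1 x) (r1 y).
case: (ip (A x) x) => a1 b1; case: (ip (A x) y) => a b; case: (ip (A y) x) => c d;
  case: (ip (A y) y) => g h /=.
simpc => e1 e2 h1 h2.
apply/eqP; rewrite eq_complex /=; apply/andP; split; apply/eqP; lra.
Qed.

Definition Aform (A : H -> H) : H -> H -> R[i] := fun x y => ip (A x) y.

Lemma AformD A : positive_op ip A -> forall a x y z,
  Aform A (a *: x + y) z = a * Aform A x z + Aform A y z.
Proof. by case=> [[hl _] _] a x y z; rewrite /Aform hl (ipD hH). Qed.
Lemma AformC A : positive_op ip A -> forall x y, Aform A y x = conjc (Aform A x y).
Proof. by move=> hA x y; rewrite /Aform (pos_herm hA). Qed.

End Ops.
Section Seq.
Context (R : realType) (H : lmodType R[i]) (ip : H -> H -> R[i])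
  (hH : is_separable_hilbert ip).
Local Notation hnorm := (hnorm ip).
Local Notation converges := (converges ip).

Lemma small_eq0 z : (forall e, 0 < e -> hnorm z < e) -> z = 0.
Proof.
move=> h; apply: (hnorm_eq0 hH); apply/eqP; rewrite eq_le (hnorm_ge0 _) andbT.
by apply/ler_addgt0Pr => e e0; rewrite add0r ltW // h.
Qed.

Lemma le_small (a : R) : (forall e, 0 < e -> a <= e) -> a <= 0.
Proof. by move=> h; apply/ler_addgt0Pr => e e0; rewrite add0r h. Qed.

Lemma conv_unique u l1 l2 : converges u l1 -> converges u l2 -> l1 = l2.
Proof.
move=> h1 h2; apply/eqP; rewrite -subr_eq0; apply/eqP; apply: small_eq0 => e e0.
have e2 : 0 < e / 2 by rewrite divr_gt0.
have [N1 hN1] := h1 _ e2; have [N2 hN2] := h2 _ e2.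
have := hnormB_tri hH l1 (u (maxn N1 N2)) l2.
rewrite (hnormB hH l1 (u _)).
have := hN1 (maxn N1 N2) (leq_maxl _ _); have := hN2 (maxn N1 N2) (leq_maxr _ _).
move=> a b c; lra.
Qed.

Lemma conv_const l : converges (fun _ => l) l.
Proof. by move=> e e0; exists 0%N => n _; rewrite subrr (hnorm0 hH). Qed.

Lemma conv_op T u l : bounded_op ip T -> converges u l -> converges (fun n => T (u n)) (T l).
Proof.
move=> hT hu e e0; have [K [K0 hK]] := bnd_pos hT.
have [N hN] := hu (e / K) (divr_gt0 e0 K0).
exists N => n hn; rewrite -(opB hT.1); apply: le_lt_trans (hK _) _.
by rewrite -ltr_pdivlMl // mulrC hN.
Qed.

Lemma conv_add u v l m : converges u l -> converges v m ->
  converges (fun n => u n + v n) (l + m).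
Proof.
move=> hu hv e e0.
have e2 : 0 < e / 2 by rewrite divr_gt0.
have [N1 hN1] := hu _ e2; have [N2 hN2] := hv _ e2.
exists (maxn N1 N2) => n hn.
have -> : u n + v n - (l + m) = (u n - l) + (v n - m).
  by rewrite opprD addrACA.
apply: le_lt_trans (hnormD hH _ _) _.
have := hN1 n (leq_trans (leq_maxl _ _) hn); have := hN2 n (leq_trans (leq_maxr _ _) hn).
move=> a b; lra.
Qed.

Lemma conv_opp u l : converges u l -> converges (fun n => - u n) (- l).
Proof. move=> hu e e0; have [N hN] := hu e e0; exists N => n hn. by rewrite -opprD (hnormN hH) hN. Qed.

Lemma conv_sub u v l m : converges u l -> converges v m ->
  converges (fun n => u n - v n) (l - m).
Proof. by move=> hu hv; apply: conv_add => //; apply: conv_opp. Qed.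

Lemma conv_zero_iff u l : converges u l <-> converges (fun n => u n - l) 0.
Proof.
split=> h e e0; have [N hN] := h e e0; exists N => n hn; have := hN n hn.
  by rewrite subr0.
by rewrite subr0.
Qed.

Lemma conv_norm_le u l c : converges u l -> (forall n, hnorm (u n) <= c) -> hnorm l <= c.
Proof.
move=> hu hc; rewrite -subr_le0; apply: le_small => e e0.
have [N hN] := hu e e0.
have := hnormB_tri hH l (u N) 0; rewrite !subr0 (hnormB hH l).
have := hN N (leqnn _); have := hc N; move=> a b d; lra.
Qed.

Lemma ip_tiny a z : (forall e, 0 < e -> exists y, z = ip a y /\ hnorm y < e) -> z = 0.
Proof.
move=> h.
have key d : 0 < d -> `|complex.Re z| <= d /\ `|complex.Im z| <= d.
  move=> d0.
  have e0 : 0 < d / (hnorm a + 1) by rewrite divr_gt0 //; have := hnorm_ge0 ip a; lra.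
  have [y [-> hy]] := h _ e0.
  have ha := hnorm_ge0 ip a.
  have hb : hnorm a * hnorm y <= d.
    have : hnorm a * hnorm y <= (hnorm a + 1) * (d / (hnorm a + 1)).
      apply: ler_pM; [exact: hnorm_ge0|exact: hnorm_ge0|lra|exact: ltW].
    have hpos : 0 < hnorm a + 1 by lra.
    by rewrite mulrCA divff ?mulr1 // gt_eqF.
  split; [exact: le_trans (CS hH a y) hb | exact: le_trans (Im_ip_bound hH a y) hb].
have p0 : complex.Re z = 0.
  apply/normr0_eq0/eqP; rewrite eq_le normr_ge0 andbT; apply: le_small => d d0.
  exact: (key d d0).1.
have q0 : complex.Im z = 0.
  apply/normr0_eq0/eqP; rewrite eq_le normr_ge0 andbT; apply: le_small => d d0.
  exact: (key d d0).2.
by apply/eqP; rewrite eq_complex p0 q0 /= !eqxx.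
Qed.

Lemma conv_ip_r a u l : converges u l -> (forall n, ip a (u n) = 0) -> ip a l = 0.
Proof.
move=> hu h0; apply: (@ip_tiny a) => e e0.
have [N hN] := hu e e0; exists (l - u N); split.
  by rewrite (ipBr hH) h0 subr0.
by rewrite (hnormB hH) hN.
Qed.

Lemma conv_ip_l a u l : converges u l -> (forall n, ip (u n) a = 0) -> ip l a = 0.
Proof.
move=> hu h0; rewrite (ipC hH) (conv_ip_r hu) ?conjc0 // => n.
by rewrite (ipC hH) h0 conjc0.
Qed.

Definition half (n : nat) : R := (2^-1) ^+ n.

Lemma half_gt0 n : 0 < half n.
Proof. by rewrite /half exprn_gt0 // invr_gt0. Qed.
Lemma halfS n : half n.+1 = half n / 2.
Proof. by rewrite /half exprSr. Qed.

Lemma half_small c e : 0 < e -> exists N, c * half N < e.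
Proof.
move=> e0.
set x := `|c| / e.
exists (Num.bound x).
have hx : x < 2 ^+ Num.bound x by apply: upper_nthrootP.
have h2 : 0 < (2 : R) ^+ Num.bound x by rewrite exprn_gt0.
have -> : half (Num.bound x) = (2 ^+ Num.bound x)^-1 by rewrite /half exprVn.
apply: le_lt_trans (_ : `|c| * (2 ^+ Num.bound x)^-1 < e).
  by apply: ler_wpM2r; [rewrite invr_ge0 ltW | apply: ler_norm].
rewrite mulrC -ltr_pdivlMl ?invr_gt0 // invrK.
by move: hx; rewrite /x ltr_pdivrMr // mulrC.
Qed.

Lemma geo_cauchy u C : (forall n, hnorm (u n.+1 - u n) <= C * half n) -> Defs.cauchy ip u.
Proof.
move=> hu.
have C0 : 0 <= C.
  have := hu 0%N; have := hnorm_ge0 ip (u 1%N - u 0%N); rewrite /half expr0 mulr1; lra.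
have key n k : hnorm (u (n + k)%N - u n) <= 2 * C * half n * (1 - half k).
  elim: k => [|k IH]; first by rewrite addn0 subrr (hnorm0 hH) /half expr0 subrr mulr0.
  apply: le_trans (hnormB_tri hH _ (u (n + k)%N) _) _.
  rewrite addnS; have := hu (n + k)%N.
  have -> : half (n + k) = half n * half k by rewrite /half exprD.
  rewrite halfS.
  move=> h; have hn := half_gt0 n; have hk := half_gt0 k. nra.
have key2 m n : (n <= m)%N -> hnorm (u m - u n) <= 2 * C * half n.
  move=> /subnKC <-; apply: le_trans (key _ _) _.
  have h1 := half_gt0 n; have h2 := half_gt0 (m - n).
  have h3 : 0 <= C * half n * half (m - n) by rewrite !mulr_ge0 // ltW.
  nra.
move=> e e0.
have [N hN] := half_small (4 * C) e0.
exists N => m n hm hn.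
apply: le_lt_trans (hnormB_tri hH _ (u N) _) _.
rewrite (hnormB hH (u N) (u n)).
have := key2 _ _ hm; have := key2 _ _ hn; lra.
Qed.

Lemma complete u : Defs.cauchy ip u -> exists l, converges u l.
Proof. by case: hH => _ _ _ h _; apply: h. Qed.

End Seq.
Section Proj.
Context (R : realType) (H : lmodType R[i]) (ip : H -> H -> R[i])
  (hH : is_separable_hilbert ip).
Local Notation hnorm := (hnorm ip).
Local Notation converges := (converges ip).
Local Notation nn := (nn ip).

Section Sub.
Context (K : H -> Prop) (hK : subspace K).
Lemma sub0 : K 0. Proof. by case: hK. Qed.
Lemma subD x y : K x -> K y -> K (x + y). Proof. by case: hK => _ h _; apply: h. Qed.
Lemma subZ a x : K x -> K (a *: x). Proof. by case: hK => _ _ h; apply: h. Qed.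
Lemma subN x : K x -> K (- x). Proof. by move=> h; rewrite -scaleN1r; apply: subZ. Qed.
Lemma subB x y : K x -> K y -> K (x - y). Proof. by move=> a b; apply: subD => //; apply: subN. Qed.
End Sub.

Lemma half_le N m : (N <= m)%N -> half R m <= half R N.
Proof.
move=> /subnKC <-; rewrite /half exprD ler_piMr ?exprn_ge0 ?invr_ge0 //.
by rewrite exprn_ile1 // ?invr_ge0 // invf_le1 // ler1n.
Qed.

Lemma parallelogram a b : nn (a + b) + nn (a - b) = 2 * nn a + 2 * nn b.
Proof. rewrite (nnD hH) (nnB hH); ring. Qed.

Lemma nn_cont a b : nn (a + b) <= nn a + hnorm b * (hnorm b + 2 * hnorm a).
Proof.
rewrite (nnD hH) -!(hnorm_sq hH).
have := CS' hH a b; have := hnorm_ge0 ip a; have := hnorm_ge0 ip b; nra.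
Qed.

Lemma hnorm_lt_nn z e : 0 < e -> nn z < e ^+ 2 -> hnorm z < e.
Proof.
move=> e0 h; rewrite -(ltr_pXn2r (n:=2)) ?nnegrE ?(hnorm_ge0 _) ?ltW //.
by rewrite (hnorm_sq hH).
Qed.


Theorem proj_exists (K : H -> Prop) : closed_subspace ip K ->
  forall x, exists p, K p /\ forall k, K k -> ip (x - p) k = 0.
Proof.
case=> hS hC x.
pose E : set R := fun t => exists k, K k /\ t = nn (x - k).
have hinf : has_inf E.
  split; first by exists (nn (x - 0)), 0; split => //; exact: sub0.
  by exists 0 => t [k [_ ->]]; exact: nn_ge0 hH _.
set D := inf E.
have D0 : 0 <= D by apply: lb_le_inf; [case: hinf | move=> t [k [_ ->]]; exact: nn_ge0 hH _].
have Dle k : K k -> D <= nn (x - k).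
  by move=> Kk; apply: (ge_inf hinf.2); exists k.
have hex : forall n, exists k, K k /\ nn (x - k) < D + half R n.
  move=> n; have [t [k [Kk ->]] ht] := inf_adherent (half_gt0 R n) hinf.
  by exists k.
have [kk hkk] := choice hex.
have cauchy_kk : Defs.cauchy ip kk.
  move=> e e0.
  have [N hN] := half_small (4 : R) (mulr_gt0 e0 e0).
  exists N => m n hm hn; apply: hnorm_lt_nn => //.
  have [Km hm'] := hkk m; have [Kn hn'] := hkk n.
  have mid : K ((2^-1 : R[i]) *: (kk m + kk n)) by apply: subZ => //; apply: subD.
  have := Dle _ mid.
  have e2 : (x - kk m) + (x - kk n) = 2 *: (x - (2^-1 : R[i]) *: (kk m + kk n)).
    rewrite scalerBr scalerA mulfV ?scale1r; last by rewrite pnatr_eq0.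
    by rewrite scaler_nat mulr2n opprD addrACA.
  have := parallelogram (x - kk m) (x - kk n).
  rewrite e2 (nnZ hH).
  have -> : x - kk m - (x - kk n) = kk n - kk m by rewrite opprB addrC addrA subrK.
  have -> : complex.Re (2 : R[i]) ^+ 2 + complex.Im (2 : R[i]) ^+ 2 = 4.
    by rewrite /= addr0 expr0n addr0; ring.
  have := half_le hm; have := half_le hn.
  rewrite -(nnN hH (kk n - kk m)) opprB.
  move=> a b c d; lra.
have [p hp] := complete hH cauchy_kk.
have Kp : K p by apply: hC hp => n; case: (hkk n).
exists p; split => // k Kk.
have nnp : nn (x - p) <= D.
  rewrite -subr_le0; apply: le_small => e e0.
  pose B := D + 2.
  have hB n : hnorm (x - kk n) <= B.
    have := (hkk n).2; rewrite -(hnorm_sq hH).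
    have := half_le (leq0n n); rewrite /half expr0.
    have := hnorm_ge0 ip (x - kk n); move=> a b c; rewrite /B; nra.
  have B0 : 0 <= B by rewrite /B; lra.
  pose d := Num.min 1 (e / 2 / (1 + 2 * B)).
  have d0 : 0 < d by rewrite lt_min ltr01 /= !divr_gt0 //; lra.
  have hd1 : d <= 1 by rewrite ge_min lexx.
  have hd2 : d * (1 + 2 * B) <= e / 2.
    rewrite -ler_pdivlMr; last by lra.
    by rewrite ge_min lexx orbT.
  have [N1 hN1] := hp d d0.
  have [N2 hN2] := half_small (1 : R) (divr_gt0 e0 (ltr0Sn _ 1)).
  pose n := maxn N1 N2.
  have := nn_cont (x - kk n) (kk n - p); rewrite addrA subrK.
  have h1 := hN1 n (leq_maxl _ _).
  have h2 := half_le (leq_maxr N1 N2); rewrite -/n in h2.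
  have h3 := (hkk n).2; have h4 := hB n.
  have h5 := hnorm_ge0 ip (kk n - p); have h6 := hnorm_ge0 ip (x - kk n).
  move=> hc.
  have : hnorm (kk n - p) * (hnorm (kk n - p) + 2 * hnorm (x - kk n)) <= d * (1 + 2 * B).
    apply: ler_pM; [exact: h5 | by rewrite addr_ge0 // mulr_ge0 | exact: ltW h1 |].
    by apply: lerD; [lra | rewrite ler_pM2l].
  nra.
have : ip (x - p) k = 0.
  apply: (var_orth (ipD hH) (ipC hH)) => c.
  rewrite /qf -!/(nn _).
  apply: le_trans nnp _; rewrite -addrA -opprD.
  apply: Dle; apply: subD => //; exact: subZ.
done.
Qed.

End Proj.
Section ProjOp.
Context (R : realType) (H : lmodType R[i]) (ip : H -> H -> R[i])
  (hH : is_separable_hilbert ip).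
Local Notation hnorm := (hnorm ip).
Local Notation converges := (converges ip).
Local Notation nn := (nn ip).

Lemma conjK (z : R[i]) : conjc (conjc z) = z.
Proof. by case: z => a b /=; rewrite opprK. Qed.

Lemma orth_zero d : (forall x, ip x d = 0) -> d = 0.
Proof. by move=> h; apply: (ip_eq0 hH); apply: h. Qed.

Lemma ip_ext z1 z2 : (forall x, ip x z1 = ip x z2) -> z1 = z2.
Proof.
move=> h; apply/eqP; rewrite -subr_eq0; apply/eqP; apply: orth_zero => x.
by rewrite (ipBr hH) h subrr.
Qed.

Section PK.
Context (K : H -> Prop) (hK : closed_subspace ip K).
Let hS : subspace K. Proof. by case: hK. Qed.

Definition projK x : H := projT1 (cid (proj_exists hH hK x)).
Lemma projK_in x : K (projK x).
Proof. by rewrite /projK; case: cid => p [] /=. Qed.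
Lemma projK_orth x k : K k -> ip (x - projK x) k = 0.
Proof. by rewrite /projK; case: cid => p [] /= _ h; apply: h. Qed.

Lemma orth_in_zero d : K d -> (forall k, K k -> ip d k = 0) -> d = 0.
Proof. by move=> Kd h; apply: (ip_eq0 hH); apply: h. Qed.

Lemma projK_uniq x p : K p -> (forall k, K k -> ip (x - p) k = 0) -> projK x = p.
Proof.
move=> Kp hp; apply/eqP; rewrite -subr_eq0; apply/eqP.
apply: orth_in_zero; first by apply: subB => //; exact: projK_in.
move=> k Kk.
have -> : projK x - p = (x - p) - (x - projK x).
  by symmetry; rewrite opprB addrC addrA subrK.
by rewrite (ipBl hH) hp // projK_orth // subrr.
Qed.

Lemma projK_id k : K k -> projK k = k.
Proof. by move=> Kk; apply: projK_uniq => // k' _; rewrite subrr (ip0l hH). Qed.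

Lemma projK_lin a x y : projK (a *: x + y) = a *: projK x + projK y.
Proof.
apply: projK_uniq; first by apply: (subD hS); [apply: (subZ hS)|]; exact: projK_in.
move=> k Kk.
have -> : a *: x + y - (a *: projK x + projK y) = a *: (x - projK x) + (y - projK y).
  by rewrite scalerBr opprD addrACA.
by rewrite (ipD hH) !projK_orth // mulr0 addr0.
Qed.

Lemma projK_norm x : hnorm (projK x) <= hnorm x.
Proof.
have e : x = projK x + (x - projK x) by rewrite addrC subrK.
have h0 : ip (projK x) (x - projK x) = 0.
  by rewrite (ipC hH) projK_orth ?conjc0 //; exact: projK_in.
rewrite /Defs.hnorm ler_sqrt ?nn_ge0 //.
rewrite -!/(nn _) {2}e (nnD hH) h0 /=.
have := nn_ge0 hH (x - projK x); lra.
Qed.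

Lemma projK_bounded : bounded_op ip projK.
Proof. split; first exact: projK_lin. by exists 1 => x; rewrite mul1r projK_norm. Qed.

End PK.

Lemma adj_exists T : bounded_op ip T -> forall y, exists z, forall x, ip (T x) y = ip x z.
Proof.
move=> hT y.
have hl := hT.1.
pose f x := ip (T x) y.
have flin a x x' : f (a *: x + x') = a * f x + f x' by rewrite /f hl (ipD hH).
have f0 : f 0 = 0 by rewrite /f (op0 hl) (ip0l hH).
have [allz|] := pselect (forall x, f x = 0).
  by exists 0 => x; rewrite (ip0r hH); exact: allz.
move=> /existsNP [x0 fx0].
pose K x := f x = 0.
have hK : closed_subspace ip K.
  split; first split.
  - exact: f0.
  - by move=> x x' h1 h2; rewrite /K -[x]scale1r flin h1 h2 mulr0 addr0.
  - by move=> a x h; rewrite /K -[a *: x]addr0 flin h f0 mulr0 addr0.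
  - move=> u l hu hl'; rewrite /K /f.
    apply: (conv_ip_l hH) (conv_op hT hl') _ => n; exact: hu.
have [p [Kp hp]] := proj_exists hH hK x0.
set w := x0 - p.
have fw : f w = f x0.
  by rewrite /w -[x0 - p]addrC -scaleN1r flin Kp mulr0 add0r.
have wnz : ip w w != 0.
  apply/eqP => /(ip_eq0 hH) w0; apply: fx0; by rewrite -fw w0.
exists (conjc (f w / ip w w) *: w) => x.
rewrite (ipZr hH) conjK.
have v0 : ip (f x *: w - f w *: x) w = 0.
  have Kv : K (f x *: w - f w *: x).
    have fD x1 x2 : f (x1 + x2) = f x1 + f x2 by rewrite -{1}[x1]scale1r flin mul1r.
    have fZ a x1 : f (a *: x1) = a * f x1 by rewrite -[a *: x1]addr0 flin f0 addr0.
    rewrite /K fD -scaleNr !fZ fw; ring.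
  by rewrite (ipC hH) hp // conjc0.
move: v0; rewrite (ipBl hH) !(ipZl hH) => /eqP; rewrite subr_eq0 => /eqP v0.
rewrite -/(f x); apply: (mulIf wnz); rewrite v0; field; exact: wnz.
Qed.

Lemma adj_bounded_exists T : bounded_op ip T ->
  exists Ts, bounded_op ip Ts /\ is_adjoint ip T Ts.
Proof.
move=> hT; have [Ts hTs0] := choice (adj_exists hT).
have hTs : forall y x : H, ip (T x) y = ip x (Ts y) := hTs0.
have lin (a : R[i]) (x y : H) : Ts (a *: x + y) = a *: Ts x + Ts y.
  apply: ip_ext => z; rewrite -(hTs (a *: x + y) z) (ipDr hH) (ipZr hH) (hTs x z) (hTs y z).
  by rewrite (ipDr hH) (ipZr hH).
exists Ts; split; last by move=> x y; rewrite hTs.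
split => //.
have [K [K0 hK]] := bnd_pos hT.
exists K => y.
have e : nn (Ts y) = complex.Re (ip (T (Ts y)) y) by rewrite hTs.
have := CS' hH (T (Ts y)) y; rewrite -e -(hnorm_sq hH) => h.
have h1 := hK (Ts y).
have h2 := hnorm_ge0 ip (Ts y); have h3 := hnorm_ge0 ip y; have h4 := hnorm_ge0 ip (T (Ts y)).
have [z0|zp] := eqVneq (hnorm (Ts y)) 0.
  by rewrite z0 mulr_ge0 // ltW.
have zpos : 0 < hnorm (Ts y) by rewrite lt_def zp h2.
have : hnorm (Ts y) * hnorm (Ts y) <= hnorm (Ts y) * (K * hnorm y).
  rewrite -expr2; apply: le_trans h _.
  nra.
by rewrite ler_pM2l.
Qed.

End ProjOp.
Lemma zid1 (V : zmodType) (a b p s : V) : a - b - s = (a - (p + s)) + (p - b).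
Proof. by rewrite [in RHS]opprD (addrA a) (addrAC (a - p) (-s)) (addrA (a - p)) subrK. Qed.

Lemma absurd_2r (R : realType) (x r : R) : 0 < r -> x <= r -> 2 * r <= x -> False.
Proof. move=> *; lra. Qed.

Section OpenMap.
Context (R : realType) (H : lmodType R[i]) (ip : H -> H -> R[i])
  (hH : is_separable_hilbert ip).
Local Notation hnorm := (hnorm ip).
Local Notation converges := (converges ip).

Lemma conv_shift u l j : converges u l -> converges (fun m => u (m + j)%N) l.
Proof. by move=> h e e0; have [N hN] := h e e0; exists N => n hn; apply: hN; apply: leq_trans hn (leq_addr _ _). Qed.

Lemma conv_half_zero u (c : R) : (forall k, hnorm (u k) <= half R k * c) -> converges u 0.
Proof.
move=> h e e0; have [N hN] := half_small c e0.
exists N => n hn; rewrite subr0; apply: le_lt_trans (h n) _.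
have c0 : 0 <= c by have := h 0%N; rewrite /half expr0 mul1r => h0; apply: le_trans h0; exact: hnorm_ge0.
apply: le_lt_trans hN; rewrite mulrC; apply: ler_wpM2l => //; exact: half_le.
Qed.

Section OM.
Context (T : H -> H) (M : H -> Prop) (hT : bounded_op ip T)
  (hM : closed_subspace ip M) (hS : closed_set ip (op_image T M)).
Let hl := hT.1.
Let hMs : subspace M. Proof. by case: hM. Qed.
Local Notation S := (op_image T M).

Lemma S_sub : subspace S.
Proof.
split.
- by exists 0; [exact: sub0 | exact: op0].
- by move=> _ _ [x Mx <-] [y My <-]; exists (x + y); [exact: subD | rewrite (opD hl)].
- by move=> a _ [x Mx <-]; exists (a *: x); [exact: subZ | rewrite (opZ hl)].
Qed.

Definition Dn (n : nat) (s : H) := forall e, 0 < e ->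
  exists x, [/\ M x, hnorm x <= n%:R & hnorm (T x - s) < e].

Lemma baire_step : exists (n : nat) (p : H) (r : R), [/\ S p, 0 < r &
  forall s, S s -> hnorm (s - p) < r -> Dn n s].
Proof.
have [//|hneg] := pselect (exists (n : nat) (p : H) (r : R), [/\ S p, 0 < r &
  forall s, S s -> hnorm (s - p) < r -> Dn n s]).
have step1 n p (r : R) : S p -> 0 < r -> exists s, [/\ S s, hnorm (s - p) < r & ~ Dn n s].
  move=> Sp r0; have [//|no] := pselect (exists s, [/\ S s, hnorm (s - p) < r & ~ Dn n s]).
  exfalso; apply: hneg; exists n, p, r; split => // s Ss hs.
  have [//|nD] := pselect (Dn n s).
  by exfalso; apply: no; exists s.
have step2 n s : ~ Dn n s -> exists e : R, 0 < e /\ forall x, M x -> hnorm x <= n%:R -> e <= hnorm (T x - s).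
  move=> nD; have [//|no] := pselect (exists e : R, 0 < e /\ forall x, M x -> hnorm x <= n%:R -> e <= hnorm (T x - s)).
  exfalso; apply: nD => e e0.
  have [//|nx] := pselect (exists x, [/\ M x, hnorm x <= n%:R & hnorm (T x - s) < e]).
  exfalso; apply: no; exists e; split => // x Mx hx.
  rewrite leNgt; apply/negP => lt; apply: nx; by exists x.
pose P (k : nat * (H * R)) (q : H * R) :=
  (S k.2.1 /\ 0 < k.2.2) ->
  [/\ S q.1, 0 < q.2, q.2 <= k.2.2 / 2, hnorm (q.1 - k.2.1) <= k.2.2 / 2 &
     forall x, M x -> hnorm x <= k.1%:R -> 2 * q.2 <= hnorm (T x - q.1)].
have hP : forall k, exists q, P k q.
  move=> [n [p r]].
  case: (pselect (S p /\ 0 < r)); last first.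
    by move=> hc; exists (0, 1) => hc'; exfalso; apply: hc.
  case=> Sp r0.
  have [s [Ss hs nD]] := step1 n p (r / 2) Sp (divr_gt0 r0 (ltr0Sn _ 1)).
  have [e [e0 he]] := step2 n s nD.
  exists (s, Num.min (r / 2) (e / 2)) => _ /=; split => //.
  - by rewrite lt_min !divr_gt0.
  - by rewrite ge_min lexx.
  - exact: ltW.
  - move=> x Mx hx; apply: le_trans (he x Mx hx).
    have : Num.min (r / 2) (e / 2) <= e / 2 by rewrite ge_min lexx orbT.
    lra.
have [F hF0] := choice hP.
have hF : forall k, P k (F k) := hF0.
pose z := fix z (n : nat) : H * R := if n is n'.+1 then F (n', z n') else (0, 1).
have zS n : z n.+1 = F (n, z n) by [].
have inv n : [/\ S (z n).1, 0 < (z n).2 & (z n).2 <= half R n].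
  elim: n => [|n [IH1 IH2 IH3]]; first by split; [exact: (sub0 S_sub) | exact: ltr01 | rewrite /half expr0].
  have [h1 h2 h3 h4 _] := hF (n, z n) (conj IH1 IH2).
  rewrite zS; split => //; apply: le_trans h3 _; rewrite halfS /=.
  lra.
pose p n := (z n).1; pose r n := (z n).2.
have hstep n : hnorm (p n.+1 - p n) <= r n / 2 /\ r n.+1 <= r n / 2.
  have [h1 h2 _] := inv n.
  have [_ _ h3 h4 _] := hF (n, z n) (conj h1 h2).
  by rewrite /p /r zS; split.
have cauchy_p : Defs.cauchy ip p.
  apply: (geo_cauchy hH (C := 1)) => n.
  have [h _] := hstep n; apply: le_trans h _.
  have [_ _ h3] := inv n; rewrite mul1r; have := half_gt0 R n; rewrite /r; lra.
have [pl hpl] := complete hH cauchy_p.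
have Spl : S pl by apply: hS hpl => n; have [] := inv n.
have tail j k : hnorm (p (k + j)%N - p j) + r (k + j)%N <= r j.
  elim: k => [|k IH]; first by rewrite add0n subrr (hnorm0 hH) add0r.
  have [h1 h2] := hstep (k + j)%N.
  have := hnormB_tri hH (p (k.+1 + j)%N) (p (k + j)%N) (p j).
  rewrite addSn; lra.
have dist j : hnorm (pl - p j) <= r j.
  apply: (conv_norm_le hH (u := fun k => p (k + j)%N - p j)).
    by have := conv_sub hH (conv_shift j hpl) (conv_const hH (p j)); apply.
  move=> k; have := tail j k; have [_ h _] := inv (k + j)%N; rewrite /r; lra.
case: Spl => x0 Mx0 Tx0.
pose n := Num.bound (hnorm x0).
have hn : hnorm x0 <= n%:R by apply: ltW; apply: archi_boundP; exact: hnorm_ge0.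
have [h1 h2 _] := inv n.
have [_ _ _ _ h5] := hF (n, z n) (conj h1 h2).
have := h5 x0 Mx0 hn; rewrite -zS Tx0.
have := dist n.+1; have [_ h6 _] := inv n.+1; rewrite /p /r.
by move=> a b; exfalso; apply: (absurd_2r h6 a b).
Qed.

Lemma approx : exists c, 0 < c /\ forall s, S s -> forall e, 0 < e ->
  exists x, [/\ M x, hnorm x <= c * hnorm s & hnorm (T x - s) < e].
Proof.
have [n [p [r [Sp r0 hD]]]] := baire_step.
have D2 s : S s -> hnorm s < r -> forall e, 0 < e ->
    exists x, [/\ M x, hnorm x <= 2 * n%:R & hnorm (T x - s) < e].
  move=> Ss hs e e0.
  have e2 : 0 < e / 2 by rewrite divr_gt0.
  have Sps : S (p + s) by apply: subD S_sub _ _ Sp Ss.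
  have hps : hnorm (p + s - p) < r by rewrite addrAC subrr add0r.
  have hpp : hnorm (p - p) < r by rewrite subrr (hnorm0 hH).
  have [x1 [M1 n1 t1]] := hD (p + s) Sps hps _ e2.
  have [x2 [M2 n2 t2]] := hD p Sp hpp _ e2.
  exists (x1 - x2); split; first exact: subB.
    by apply: le_trans (hnormB_tri hH x1 0 x2) _; rewrite subr0 sub0r (hnormN hH); lra.
  rewrite (opB hl) (zid1 (T x1) (T x2) p s).
  apply: le_lt_trans (hnormD hH _ _) _.
  rewrite (hnormB hH p); lra.
exists (4 * n%:R / r + 1); split.
  by rewrite ltr_wpDl // !mulr_ge0 // ?invr_ge0 ?ltW.
move=> s Ss e e0.
have [s0|snz] := eqVneq s 0.
  by exists 0; split; [exact: sub0 | rewrite (hnorm0 hH) s0 (hnorm0 hH) mulr0 | rewrite (op0 hl) s0 subrr (hnorm0 hH)].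
have sp : 0 < hnorm s by rewrite lt_def (hnorm_ge0 ip s) andbT; apply/eqP => /(hnorm_eq0 hH); apply/eqP.
pose lam := r / (2 * hnorm s).
have lam0 : 0 < lam by rewrite divr_gt0 // mulr_gt0.
have Ss' : S (lam%:C *: s) by apply: subZ S_sub _ _ Ss.
have hs' : hnorm (lam%:C *: s) < r.
  rewrite (hnormZr hH) gtr0_norm //.
  have -> : lam * hnorm s = r / 2 by rewrite /lam; field; rewrite gt_eqF.
  lra.
have [x' [M' n' t']] := D2 _ Ss' hs' (lam * e) (mulr_gt0 lam0 e0).
exists (lam^-1%:C *: x'); split.
- exact: subZ.
- rewrite (hnormZr hH) gtr0_norm ?invr_gt0 //.
  rewrite ler_pdivrMl // mulrA.
  apply: le_trans n' _.
  have -> : lam * (4 * n%:R / r + 1) * hnorm s = 2 * n%:R + lam * hnorm s.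
    rewrite /lam; field; apply/andP; split; apply/eqP; [lra|apply/eqP; rewrite gt_eqF //].
  by rewrite lerDl mulr_ge0 // ltW.
- rewrite (opZ hl).
  have -> : lam^-1%:C *: T x' - s = lam^-1%:C *: (T x' - lam%:C *: s).
    rewrite scalerBr scalerA -rmorphM /= mulVf ?gt_eqF // scale1r.
    done.
  rewrite (hnormZr hH) gtr0_norm ?invr_gt0 // ltr_pdivrMl //.
Qed.

Theorem open_map : exists c, 0 < c /\ forall s, S s ->
  exists x, [/\ M x, T x = s & hnorm x <= c * hnorm s].
Proof.
have [c0 [c00 happ]] := approx.
exists (2 * c0); split; first by rewrite mulr_gt0.
move=> s Ss.
have [s0|snz] := eqVneq s 0.
  by exists 0; split; [exact: sub0 | rewrite (op0 hl) | rewrite (hnorm0 hH) s0 (hnorm0 hH) mulr0].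
have sp : 0 < hnorm s by rewrite lt_def (hnorm_ge0 ip s) andbT; apply/eqP => /(hnorm_eq0 hH); apply/eqP.
set sig := hnorm s.
have hG : forall k : nat * H, exists x, S k.2 ->
    [/\ M x, hnorm x <= c0 * hnorm k.2 & hnorm (T x - k.2) < half R k.1.+1 * sig].
  move=> [k t]; have [St|nSt] := pselect (S t); last by exists 0.
  have [x hx] := happ t St _ (mulr_gt0 (half_gt0 R k.+1) sp).
  by exists x.
have [G hG0] := choice hG.
have hG' : forall k t, S t -> [/\ M (G (k, t)), hnorm (G (k, t)) <= c0 * hnorm t &
    hnorm (T (G (k, t)) - t) < half R k.+1 * sig] := fun k t => hG0 (k, t).
pose res := fix res (k : nat) : H := if k is k'.+1 then res k' - T (G (k', res k')) else s.
have resS k : res k.+1 = res k - T (G (k, res k)) by [].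
have inv k : S (res k) /\ hnorm (res k) <= half R k * sig.
  elim: k => [|k [IH1 IH2]]; first by split => //=; rewrite /half expr0 mul1r.
  have [h1 h2 h3] := hG' k _ IH1.
  rewrite resS; split.
    by apply: subB S_sub _ _ IH1 _; exists (G (k, res k)).
  by rewrite (hnormB hH); apply: ltW.
pose xs k := G (k, res k).
pose X := fix X (k : nat) : H := if k is k'.+1 then X k' + xs k' else 0.
have XS k : X k.+1 = X k + xs k by [].
have xsM k : M (xs k) by have [h1 h2 h3] := hG' k _ (inv k).1.
have xsn k : hnorm (xs k) <= (c0 * sig) * half R k.
  have [h1 h2 h3] := hG' k _ (inv k).1.
  apply: le_trans h2 _; rewrite -mulrA; apply: ler_wpM2l; first exact: ltW.
  by rewrite mulrC; exact: (inv k).2.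
have XM k : M (X k).
  by elim: k => [|k IH]; [exact: sub0 | rewrite XS; apply: subD].
have TX k : T (X k) = s - res k.
  elim: k => [|k IH]; first by rewrite /= (op0 hl) subrr.
  by rewrite XS (opD hl) IH resS opprB addrA addrAC.
have Xn k : hnorm (X k) <= 2 * c0 * sig * (1 - half R k).
  elim: k => [|k IH]; first by rewrite /= (hnorm0 hH) /half expr0 subrr mulr0.
  rewrite XS; apply: le_trans (hnormD hH _ _) _.
  have := xsn k; rewrite halfS; lra.
have cX : Defs.cauchy ip X.
  apply: (geo_cauchy hH (C := c0 * sig)) => k.
  by rewrite XS addrAC subrr add0r; exact: xsn.
have [x hx] := complete hH cX.
exists x; split.
- by apply: (proj2 hM) hx.
- apply: (conv_unique hH (conv_op hT hx)).
  have -> : (fun n => T (X n)) = (fun n => s - res n) by apply: funext => n; exact: TX.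
  rewrite -[s in converges _ s]subr0.
  have h0 : converges res 0.
    apply: (conv_half_zero (c := sig)) => k; exact: (inv k).2.
  by have := conv_sub hH (conv_const hH s) h0; apply.
- apply: (conv_norm_le hH hx) => k; apply: le_trans (Xn k) _.
  have := half_gt0 R k; have : 0 <= c0 * sig by rewrite mulr_ge0 // ltW.
  nra.
Qed.

End OM.
End OpenMap.
Section BndOps.
Context (R : realType) (H : lmodType R[i]) (ip : H -> H -> R[i])
  (hH : is_separable_hilbert ip).
Local Notation hnorm := (hnorm ip).

Lemma bnd_id : bounded_op ip (fun x : H => x).
Proof. by split => //; exists 1 => x; rewrite mul1r. Qed.

Lemma bnd_comp T1 T2 : bounded_op ip T1 -> bounded_op ip T2 -> bounded_op ip (fun x => T1 (T2 x)).
Proof.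
move=> h1 h2; split; first by move=> a x y; rewrite h2.1 h1.1.
have [K1 [K10 hK1]] := bnd_pos h1; have [K2 [K20 hK2]] := bnd_pos h2.
exists (K1 * K2) => x; apply: le_trans (hK1 _) _.
by rewrite -mulrA ler_pM2l.
Qed.

Lemma bnd_add T1 T2 : bounded_op ip T1 -> bounded_op ip T2 -> bounded_op ip (fun x => T1 x + T2 x).
Proof.
move=> h1 h2; split.
  by move=> a x y; rewrite h1.1 h2.1 scalerDr addrACA.
have [K1 [K10 hK1]] := bnd_pos h1; have [K2 [K20 hK2]] := bnd_pos h2.
exists (K1 + K2) => x; apply: le_trans (hnormD hH _ _) _.
by rewrite mulrDl lerD.
Qed.

Lemma bnd_opp T1 : bounded_op ip T1 -> bounded_op ip (fun x => - T1 x).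
Proof.
move=> h1; split.
  by move=> a x y; rewrite h1.1 opprD scalerN.
have [K1 [K10 hK1]] := bnd_pos h1.
by exists K1 => x; rewrite (hnormN hH).
Qed.

Lemma bnd_sub T1 T2 : bounded_op ip T1 -> bounded_op ip T2 -> bounded_op ip (fun x => T1 x - T2 x).
Proof. by move=> h1 h2; apply: bnd_add => //; apply: bnd_opp. Qed.

Lemma projK_normc K (hK : closed_subspace ip K) x : hnorm (x - projK hH hK x) <= hnorm x.
Proof.
have e : x = projK hH hK x + (x - projK hH hK x) by rewrite addrC subrK.
have h0 : ip (projK hH hK x) (x - projK hH hK x) = 0.
  by rewrite (ipC hH) projK_orth ?conjc0 //; exact: projK_in.
rewrite /Defs.hnorm ler_sqrt ?nn_ge0 //.
rewrite -!/(nn ip _) [in X in _ <= X]e (nnD hH) h0 /=.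
have := nn_ge0 hH (projK hH hK x); lra.
Qed.

End BndOps.

Section Main.
Context (R : realType) (H : lmodType R[i]) (ip : H -> H -> R[i])
  (hH : is_separable_hilbert ip) (A B : H -> H) (M : H -> Prop)
  (hA : positive_op ip A) (hB : bounded_op ip B) (hM : closed_subspace ip M)
  (hS : closed_set ip (op_image B M)).
Local Notation hnorm := (hnorm ip).
Local Notation S := (op_image B M).
Let hSs : subspace S := S_sub hB hM.
Let hMs : subspace M. Proof. by case: hM. Qed.
Let hAl := hA.1.1.
Let hBl := hB.1.

Definition perp (w : H) := forall s, S s -> ip (A s) w = 0.

Lemma perp_sub : subspace perp.
Proof.
split.
- by move=> s _; rewrite (ip0r hH).
- by move=> x y hx hy s Ss; rewrite (ipDr hH) hx // hy // addr0.
- by move=> a x hx s Ss; rewrite (ipZr hH) hx // mulr0.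
Qed.

Lemma perp_closed : closed_set ip perp.
Proof. by move=> u l hu hl s Ss; apply: (conv_ip_r hH hl) => n; apply: hu. Qed.

Lemma qA_ge0 z : 0 <= qf (Aform ip A) z.
Proof. by have := hA.2 z; rewrite /qf /Aform lecE => /andP[_]. Qed.

Lemma Anorm_qf z : Anorm ip A z = Num.sqrt (qf (Aform ip A) z).
Proof. by []. Qed.

Lemma perp_herm s w : S s -> perp w -> ip (A w) s = 0.
Proof.
move=> Ss hw; have := AformC hH hA s w; rewrite /Aform => ->.
by rewrite hw // conjc0.
Qed.

Lemma forward G : A_inverse_restricted ip A B M G -> compatible ip A S.
Proof.
case=> hG hGM hmin.
have GM y : M (G y) by apply: hGM; exists y.
have F1 y : perp (y - B (G y)).
  move=> _ [x Mx <-].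
  set u := y - B (G y).
  have : Aform ip A u (B x) = 0.
    apply: (var_orth (AformD hH hA) (AformC hH hA)) => c.
    have e : u - c *: B x = y - B (G y + c *: x).
      by rewrite /u (opD hBl) (opZ hBl) opprD addrA.
    rewrite e; have := hmin y (G y + c *: x).
    rewrite /Defs.Anorm -!/(qf (Aform ip A) _) ler_sqrt ?qA_ge0 //.
    by apply; apply: (subD hMs) => //; apply: (subZ hMs).
  have := AformC hH hA u (B x); rewrite /Aform => -> ->.
  by rewrite conjc0.
pose N z := S z /\ perp z.
have hN : closed_subspace ip N.
  split.
    split.
    - by split; [exact: (sub0 hSs) | exact: (sub0 perp_sub)].
    - by move=> x y [hx1 hx2] [hy1 hy2]; split; [exact: (subD hSs) | exact: (subD perp_sub)].
    - by move=> a x [h1 h2]; split; [exact: (subZ hSs) | exact: (subZ perp_sub)].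
  move=> u l hu hl; split.
    by apply: hS hl => n; case: (hu n).
  by apply: perp_closed hl => n; case: (hu n).
pose P := projK hH hN.
pose Q y := B (G y) + P (y - B (G y)).
have hQb : bounded_op ip Q.
  apply: (bnd_add hH); first exact: bnd_comp.
  apply: bnd_comp; first exact: projK_bounded.
  apply: (bnd_sub hH); [exact: bnd_id | exact: bnd_comp].
have QS y : S (Q y).
  apply: (subD hSs); first by exists (G y).
  by case: (projK_in hH hN (y - B (G y))).
have F5a y : y - Q y = (y - B (G y)) - P (y - B (G y)).
  by rewrite /Q opprD addrA.
have F5p y : perp (y - Q y).
  rewrite F5a; apply: (subB perp_sub); first exact: F1.
  by case: (projK_in hH hN (y - B (G y))).
have F5o y n : N n -> ip (y - Q y) n = 0.
  by move=> Nn; rewrite F5a projK_orth.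
have F6 s : S s -> Q s = s.
  move=> Ss.
  have d0 : s - Q s = 0.
    apply: (ip_eq0 hH); apply: F5o; split; last exact: F5p.
    by apply: (subB hSs) => //; exact: QS.
  by apply/eqP; rewrite eq_sym -subr_eq0 d0.
have [Qs [hQsb hQadj]] := adj_bounded_exists hH hQb.
exists Q; split => //.
- by move=> x; apply: F6; exact: QS.
- move=> y; split; first by case=> x <-; exact: QS.
  by move=> Sy; exists y; exact: F6.
exists Qs; split => //; split => // x.
apply: (ip_ext hH) => z.
rewrite -hQadj.
have e1 : ip (A x) (Q z) = ip (A (Q x)) (Q z).
  have -> : A x = A (Q x) + A (x - Q x) by rewrite -(opD hAl) addrC subrK.
  by rewrite (ipDl hH) (perp_herm (QS z) (F5p x)) addr0.
have e2 : ip (A (Q x)) z = ip (A (Q x)) (Q z).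
  have := ipDr hH (z - Q z) (Q z) (A (Q x)); rewrite subrK => ->.
  by rewrite (F5p z) ?add0r //; exact: QS.
by rewrite (ipC hH (A (Q x)) z) (ipC hH (A x) (Q z)) e1 e2.
Qed.

Lemma backward : compatible ip A S -> exists G, A_inverse_restricted ip A B M G.
Proof.
case=> Q [hQb Qid Qrange [Qs [hQsb [hadj hAQ]]]].
have QS y : S (Q y) by apply/Qrange; exists y.
have Qfix s : S s -> Q s = s.
  by move=> /Qrange [x <-]; rewrite Qid.
have B1 y : perp (y - Q y).
  move=> s Ss; rewrite -(Qfix s Ss) hAQ.
  rewrite (ipC hH (y - Q y) (Qs (A s))) -hadj (opB hQb.1) Qid subrr (ip0l hH).
  exact: conjc0.
have [c [c0 hom]] := open_map hH hB hM hS.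
pose K x := M x /\ B x = 0.
have hK : closed_subspace ip K.
  split.
    split.
    - by split; [exact: (sub0 hMs) | exact: (op0 hBl)].
    - by move=> x y [hx1 hx2] [hy1 hy2]; split; [exact: (subD hMs) | rewrite (opD hBl) hx2 hy2 addr0].
    - by move=> a x [h1 h2]; split; [exact: (subZ hMs) | rewrite (opZ hBl) h2 scaler0].
  move=> u l hu hl; split.
    by apply: (proj2 hM) hl => n; case: (hu n).
  apply: (conv_unique hH (conv_op hB hl)).
  have -> : (fun n => B (u n)) = (fun _ => 0) by apply: funext => n; case: (hu n).
  exact: conv_const hH _.
pose PK := projK hH hK.
have hX : forall s, exists x, S s -> [/\ M x, B x = s & hnorm x <= c * hnorm s].
  move=> s; have [Ss|nSs] := pselect (S s); last by exists 0.
  by have [x hx] := hom s Ss; exists x.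
have [X hX0] := choice hX.
have hX' : forall s, S s -> [/\ M (X s), B (X s) = s & hnorm (X s) <= c * hnorm s] := hX0.
pose G y := X (Q y) - PK (X (Q y)).
have PKK x : K (PK x) by exact: projK_in.
have GM y : M (G y).
  have [h1 _ _] := hX' _ (QS y).
  by apply: (subB hMs) => //; case: (PKK (X (Q y))).
have GB y : B (G y) = Q y.
  have [_ h2 _] := hX' _ (QS y).
  by rewrite (opB hBl) h2; case: (PKK (X (Q y))) => _ ->; rewrite subr0.
have Gorth y k : K k -> ip (G y) k = 0 by move=> Kk; apply: projK_orth.
have Gn y : hnorm (G y) <= c * hnorm (Q y).
  have [_ _ h3] := hX' _ (QS y).
  exact: le_trans (projK_normc hH hK _) h3.
have uniq x1 x2 : M x1 -> M x2 -> (forall k, K k -> ip x1 k = 0) ->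
    (forall k, K k -> ip x2 k = 0) -> B x1 = B x2 -> x1 = x2.
  move=> M1 M2 o1 o2 eB; apply/eqP; rewrite -subr_eq0; apply/eqP.
  have Kd : K (x1 - x2) by split; [exact: (subB hMs) | rewrite (opB hBl) eB subrr].
  by apply: (ip_eq0 hH); rewrite (ipBl hH) o1 // o2 // subrr.
have Glin a y y' : G (a *: y + y') = a *: G y + G y'.
  apply: uniq.
  - exact: GM.
  - by apply: (subD hMs) => //; apply: (subZ hMs).
  - exact: Gorth.
  - by move=> k Kk; rewrite (ipD hH) !Gorth // mulr0 addr0.
  - by rewrite hBl !GB hQb.1.
have [KQ [KQ0 hKQ]] := bnd_pos hQb.
exists G; split.
- split => //; exists (c * KQ) => y.
  apply: le_trans (Gn y) _; rewrite -mulrA ler_pM2l //; exact: hKQ.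
- by move=> _ [y <-]; exact: GM.
- move=> y x Mx.
  rewrite GB /Defs.Anorm -!/(qf (Aform ip A) _) ler_sqrt ?qA_ge0 //.
  have Ss : S (Q y - B x) by apply: (subB hSs) => //; exists x.
  have -> : y - B x = (y - Q y) + (Q y - B x) by rewrite addrA subrK.
  have z0 : Aform ip A (y - Q y) (Q y - B x) = 0 := perp_herm Ss (B1 y).
  rewrite [X in _ <= X](qfD (AformD hH hA) (AformC hH hA)) z0 /=.
  have := qA_ge0 (Q y - B x); rewrite /qf /Aform; lra.
Qed.

End Main.

Theorem mainTheorem15 (R : realType) (H : lmodType (R[i])) (ip : H -> H -> R[i])
  (A B : H -> H) (M : H -> Prop) :
  is_separable_hilbert ip ->
  positive_op ip A ->
  bounded_op ip B ->
  closed_set ip (op_range B) ->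
  closed_subspace ip M ->
  closed_set ip (op_image B M) ->
  ((exists G : H -> H, A_inverse_restricted ip A B M G) <->
   compatible ip A (op_image B M)).
Proof.
move=> hH hA hB _ hM hS; split.
  by case=> G hG; exact: (forward hH hA hB hM hS hG).
exact: (backward hH hA hB hM hS).
Qed.
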